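(* Let $\alpha$ be a nonzero real number and let $\gamma\colon I\to\mathbb S^2$ be a properly immersed $\alpha$-stationary curve. Suppose that the north pole $N$ is not an adherent point of $\gamma(I)$ and that $\gamma(I)\cap\mathbb S^2_+\neq\emptyset$, where $\mathbb S^2_+=\mathbb S^2\cap\{z>0\}$. Then $\alpha>-1$.
   Context: $\mathbb S^2\subset\mathbb R^3$ is the unit sphere with the Euclidean inner product $\langle,\rangle$. It is parametrized by $\Psi(u,v)=(\sin u\cos v,\sin u\sin v,\cos u)$, and $N=(0,0,1)$. The spherical distance from $\Psi(u,v)$ to $N$ is $u\in[0,\pi]$. For a curve $\gamma(t)=\Psi(u(t),v(t))$ avoiding $N$, the energy is $$E_\alpha[\gamma]=\int_\gamma\mathsf d^\alpha ds=\int u^\alpha\sqrt{u'^2+\sin^2(u)v'^2}\,dt,$$ where $\mathsf d$ is the distance to $N$. The curve is $\alpha$-stationary if it is a critical point of $E_\alpha$ (Euler–Lagrange equations). Equivalently, $\kappa=\alpha\langle\mathbf n,\xi\rangle/\mathsf d$, with $\mathbf n=(\gamma'\times\gamma)/|\gamma'|$, $\kappa=\langle\gamma'',\mathbf n\rangle/|\gamma'|^2$, and $\xi=\Psi_u$. Throughout the paper, $\alpha\ne0$. *)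

(* Defs.v *)
From Stdlib Require Import Reals.
From Coquelicot Require Import Coquelicot.
Open Scope R_scope.

Definition vec3 : Type := (R * R * R)%type.

Definition dot3 (a b : vec3) : R :=
  let '(a1, a2, a3) := a in let '(b1, b2, b3) := b in a1 * b1 + a2 * b2 + a3 * b3.

Definition cross3 (a b : vec3) : vec3 :=
  let '(a1, a2, a3) := a in let '(b1, b2, b3) := b in
  (a2 * b3 - a3 * b2, a3 * b1 - a1 * b3, a1 * b2 - a2 * b1).

Definition scal3 (c : R) (a : vec3) : vec3 :=
  let '(a1, a2, a3) := a in (c * a1, c * a2, c * a3).

Definition sub3 (a b : vec3) : vec3 :=
  let '(a1, a2, a3) := a in let '(b1, b2, b3) := b in (a1 - b1, a2 - b2, a3 - b3).

Definition norm3 (a : vec3) : R := sqrt (dot3 a a).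

Definition zcoord (a : vec3) : R := let '(_, _, a3) := a in a3.

Definition NP : vec3 := (0, 0, 1).
Definition SP : vec3 := (0, 0, -1).

Definition distN (p : vec3) : R := acos (dot3 p NP).

(** xi = Psi_u at p = Psi(u,v), written intrinsically:
    Psi_u = (cos u cos v, cos u sin v, - sin u) = (<p,N> p - N) / sin u,
    defined for p <> N, -N (where sin u <> 0). *)
Definition xi (p : vec3) : vec3 :=
  scal3 (/ sin (distN p)) (sub3 (scal3 (dot3 p NP) p) NP).

Definition curve_derivs (g g1 g2 : R -> vec3) : Prop :=
  forall t, is_derive g t (g1 t) /\ is_derive g1 t (g2 t).

Definition normal_n (g g1 : R -> vec3) (t : R) : vec3 :=
  scal3 (/ norm3 (g1 t)) (cross3 (g1 t) (g t)).

Definition kappa (g g1 g2 : R -> vec3) (t : R) : R :=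
  dot3 (g2 t) (normal_n g g1 t) / (norm3 (g1 t)) ^ 2.

(** alpha-stationary: kappa = alpha <n, xi> / d at every point (where xi is
    defined, i.e. away from the poles; the curve is assumed to avoid N). *)
Definition alpha_stationary (alpha : R) (g g1 g2 : R -> vec3) : Prop :=
  forall t, g t <> NP -> g t <> SP ->
    kappa g g1 g2 t = alpha * dot3 (normal_n g g1 t) (xi (g t)) / distN (g t).

(** A properly (= completely) immersed curve in S^2: defined on all of R,
    parametrized by arc length (|gamma'| = 1), lying on the unit sphere. *)
Definition complete_unit_speed_spherical_curve (g g1 g2 : R -> vec3) : Prop :=
  curve_derivs g g1 g2 /\
  (forall t, norm3 (g t) = 1) /\
  (forall t, norm3 (g1 t) = 1).

Definition N_not_adherent (g : R -> vec3) : Prop :=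
  exists eps, 0 < eps /\ forall t, eps <= norm3 (sub3 (g t) NP).

(* Main.v *)
Require Import Defs.
From Stdlib Require Import Reals Lra Psatz Classical.
From Coquelicot Require Import Coquelicot.
Open Scope R_scope.

Lemma deriv_cont (f : R -> R) x l : is_derive f x l -> continuity_pt f x.
Proof.
  intros H. apply is_derive_Reals in H.
  apply derivable_continuous_pt. exists l. exact H.
Qed.

Lemma nonincr (f df : R -> R) a b : a <= b ->
  (forall x, a <= x <= b -> is_derive f x (df x)) ->
  (forall x, a < x < b -> df x <= 0) -> f b <= f a.
Proof.
  intros Hab Hd Hn. destruct (Req_dec a b) as [->|Hne]; [lra|].
  destruct (MVT_cor2 f df a b) as [c [Hc1 Hc2]]; [lra| |].
  - intros c Hc. apply is_derive_Reals, Hd, Hc.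
  - specialize (Hn c Hc2). assert (df c * (b - a) <= 0).
    { apply Rmult_le_0_r; lra. } lra.
Qed.

Lemma trig_ineq u : 0 < u < PI -> u * cos u < sin u.
Proof.
  intros Hu.
  destruct (MVT_cor2 (fun x => sin x - x * cos x) (fun x => x * sin x) 0 u) as [c [Hc1 Hc2]]; [lra| |].
  - intros c Hc. apply is_derive_Reals. auto_derive; auto. ring.
  - rewrite sin_0, cos_0 in Hc1.
    assert (0 < sin c) by (apply sin_gt_0; lra).
    assert (0 < c * sin c * (u - 0)) by (apply Rmult_lt_0_compat; [apply Rmult_lt_0_compat|]; lra).
    lra.
Qed.

Lemma first_hit (f : R -> R) a b c : (forall t, continuity_pt f t) ->
  c < f a -> f b <= c -> a <= b ->
  exists m, a < m /\ f m <= c /\ forall s, a <= s < m -> c < f s.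
Proof.
  intros Hc Ha Hb Hab.
  set (E := fun s => a <= s <= b /\ forall r, a <= r <= s -> c < f r).
  assert (HE : bound E) by (exists b; intros s [Hs _]; lra).
  assert (HEa : exists x, E x) by (exists a; split; [lra| intros r Hr; replace r with a by lra; lra]).
  destruct (completeness E HE HEa) as [m [Hub Hlub]].
  assert (Ham : a <= m) by (apply Hub; destruct HEa; unfold E; split; [lra| intros r Hr; replace r with a by lra; lra]).
  assert (Hmb : m <= b) by (apply Hlub; intros s [Hs _]; lra).
  assert (Hbelow : forall s, a <= s < m -> c < f s).
  { intros s Hs. destruct (classic (exists e, E e /\ s <= e)) as [[e [[He1 He2] Hse]]|Hn].
    - apply He2; lra.
    - exfalso. assert (m <= s); [|lra]. apply Hlub. intros e He.
      destruct (Rle_lt_dec e s); [auto|]. exfalso; apply Hn; exists e; split; auto; lra. }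
  assert (Hfm : f m <= c).
  { destruct (Rle_lt_dec (f m) c) as [|Hlt]; [auto|exfalso].
    destruct (Req_dec m b) as [->|Hmb']; [lra|].
    destruct (Hc m (f m - c)) as [d [Hd Hdd]]; [lra|].
    set (m' := Rmin (m + d/2) b).
    assert (Hm' : m < m') by (unfold m'; apply Rmin_case; lra).
    assert (Hm'b : m' <= b) by (unfold m'; apply Rmin_r).
    assert (Hm'd : m' <= m + d/2) by (unfold m'; apply Rmin_l).
    assert (E m').
    { split; [split; lra|].
      intros r Hr. destruct (Rlt_le_dec r m). { apply Hbelow; lra. }
      destruct (Req_dec r m) as [->|Hrm]; [lra|].
      assert (Rabs (f r - f m) < f m - c).
      { apply (Hdd r). split. { split; [exact I| intro; apply Hrm; auto]. }
        simpl. unfold R_dist.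
        rewrite Rabs_right; lra. }
      apply Rabs_def2 in H. lra. }
    specialize (Hub m' H). lra. }
  exists m. split; [|split; auto].
  destruct (Req_dec a m) as [<-|]; lra.
Qed.
Lemma dp (z z1 z2 : R -> R) t :
 is_derive z t (z1 t) -> is_derive z1 t (z2 t) -> -1 < z t < 1 ->
 is_derive (fun t => - z1 t / sqrt (1 - (z t)²)) t
   (- (z2 t * (1 - (z t)²) + z t * (z1 t)²) / (sqrt (1 - (z t)²))^3).
Proof.
  intros H1 H2 Hz.
  assert (Hpos : 0 < 1 - (z t)²) by (unfold Rsqr; nra).
  assert (Hs : 0 < sqrt (1 - (z t)²)) by (apply sqrt_lt_R0; lra).
  auto_derive.
  - replace (1 + - (z t)²) with (1 - (z t)²) by ring.
    repeat split; try (eexists; eassumption); lra.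
  - change (Derive (fun x => z1 x) t) with (Derive z1 t).
    change (Derive (fun x => z x) t) with (Derive z t).
    rewrite (is_derive_unique _ _ _ H1), (is_derive_unique _ _ _ H2).
    replace (1 + - (z t)²) with (1 - (z t)²) by ring.
    assert (Hss : sqrt (1 - (z t)²) * sqrt (1 - (z t)²) = 1 - (z t)²) by (apply sqrt_sqrt; lra).
    set (s := sqrt (1 - (z t)²)) in *.
    rewrite <- Hss. unfold Rsqr. field. lra.
Qed.

Lemma du (z z1 : R -> R) t :
 is_derive z t (z1 t) -> -1 < z t < 1 ->
 is_derive (fun t => acos (z t)) t (- z1 t / sqrt (1 - (z t)²)).
Proof.
  intros H1 Hz.
  assert (Ha : is_derive acos (z t) (-1 / sqrt (1 - (z t)²))).
  { apply is_derive_Reals. apply (derive_pt_eq_1 _ _ _ (derivable_pt_acos _ Hz)).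
    apply derive_pt_acos. }
  pose proof (is_derive_comp acos z t _ _ Ha H1) as Hc.
  replace (- z1 t / sqrt (1 - (z t)²)) with (scal (z1 t) (-1 / sqrt (1 - (z t)²))); [exact Hc|].
  unfold scal; simpl; unfold mult; simpl. assert (0 < sqrt (1 - (z t)²)) by (apply sqrt_lt_R0; unfold Rsqr; nra).
  field. lra.
Qed.

Lemma forwardB (z z1 z2 : R -> R) :
 (forall t, is_derive z t (z1 t)) -> (forall t, is_derive z1 t (z2 t)) ->
 (forall t, z t < 1) ->
 (forall t, 0 < z t -> 0 <= z2 t * (1 - (z t)²) + z t * (z1 t)²) ->
 forall t1, 0 < z t1 -> 0 < z1 t1 -> False.
Proof.
  intros D1 D2 Hlt1 HC t1 Hz1 Hp1.
  set (s := fun t => sqrt (1 - (z t)²)).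
  set (p := fun t => - z1 t / s t).
  assert (Hs : forall t, 0 < z t -> 0 < s t).
  { intros t Ht. unfold s. apply sqrt_lt_R0. specialize (Hlt1 t). unfold Rsqr; nra. }
  assert (Dp : forall t, 0 < z t -> is_derive p t (- (z2 t * (1 - (z t)²) + z t * (z1 t)²) / (s t)^3)).
  { intros t Ht. apply dp; auto. specialize (Hlt1 t). lra. }
  assert (Dpn : forall t, 0 < z t -> - (z2 t * (1 - (z t)²) + z t * (z1 t)²) / (s t)^3 <= 0).
  { intros t Ht. specialize (HC t Ht). specialize (Hs t Ht).
    assert (0 < / (s t)^3) by (apply Rinv_0_lt_compat, pow_lt; auto).
    assert (0 <= (z2 t * (1 - (z t)²) + z t * (z1 t)²) * / (s t)^3) by (apply Rmult_le_pos; lra).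
    unfold Rdiv. lra. }
  assert (Hpt1 : p t1 < 0).
  { unfold p. specialize (Hs t1 Hz1). unfold Rdiv.
    assert (0 < z1 t1 * / s t1) by (apply Rmult_lt_0_compat; [lra| apply Rinv_0_lt_compat; lra]). lra. }
  assert (Hmono : forall b, t1 <= b -> (forall x, t1 <= x <= b -> 0 < z x) -> p b <= p t1).
  { intros b Hb Hz. apply (nonincr p (fun t => - (z2 t * (1 - (z t)²) + z t * (z1 t)²) / (s t)^3) t1 b Hb).
    - intros x Hx. apply Dp, Hz, Hx.
    - intros x Hx. apply Dpn, Hz. lra. }
  assert (Hpos : forall t, t1 <= t -> 0 < z t).
  { intros b Hb. destruct (Rlt_le_dec 0 (z b)) as [|Hzb]; [auto|exfalso].
    destruct (first_hit z t1 b 0) as [m [Hm1 [Hm2 Hm3]]]; auto.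
    { intros t. apply (deriv_cont _ _ _ (D1 t)). }
    assert (Hz1pos : forall x, t1 <= x < m -> 0 < z1 x).
    { intros x Hx. assert (Hpx : p x <= p t1) by (apply Hmono; [lra| intros y Hy; apply Hm3; lra]).
      assert (Hsx := Hs x (Hm3 x Hx)).
      assert (Heq : z1 x = - p x * s x) by (unfold p; field; lra).
      rewrite Heq. apply Rmult_lt_0_compat; lra. }
    destruct (MVT_cor2 z z1 t1 m) as [c [Hc1 Hc2]]; [lra| |].
    { intros c Hc. apply is_derive_Reals, D1. }
    assert (0 < z1 c * (m - t1)) by (apply Rmult_lt_0_compat; [apply Hz1pos|]; lra).
    lra. }
  assert (Hp : forall t, t1 <= t -> p t <= p t1).
  { intros t Ht. apply Hmono; auto. intros x Hx; apply Hpos; lra. }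
  set (u := fun t => acos (z t)).
  assert (Hu : forall t, t1 <= t -> u t - p t1 * t <= u t1 - p t1 * t1).
  { intros t Ht. apply (nonincr (fun t => u t - p t1 * t) (fun t => p t - p t1) t1 t Ht).
    - intros x Hx. apply (is_derive_minus (fun t => u t) (fun t => p t1 * t)).
      + apply du; auto. specialize (Hpos x ltac:(lra)). specialize (Hlt1 x). lra.
      + auto_derive; auto. ring.
    - intros x Hx. specialize (Hp x ltac:(lra)). lra. }
  set (T := t1 + (u t1 + 1) / (- p t1)).
  assert (HT : t1 <= T).
  { unfold T. assert (0 <= u t1) by (apply acos_bound).
    assert (0 <= (u t1 + 1) / - p t1) by (apply Rdiv_le_0_compat; lra). lra. }
  specialize (Hu T HT).
  assert (p t1 * (T - t1) = - (u t1 + 1)) by (unfold T; field; lra).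
  assert (0 <= u T) by (apply acos_bound).
  nra.
Qed.

Lemma lemmaA (z z1 z2 : R -> R) :
 (forall t, is_derive z t (z1 t)) -> (forall t, is_derive z1 t (z2 t)) ->
 (forall t, z t < 1) ->
 (forall t, 0 < z t -> 0 <= z2 t * (1 - (z t)²) + z t * (z1 t)²) ->
 (forall t, 0 < z t -> z1 t = 0 -> 0 < z2 t) ->
 forall t0, 0 < z t0 -> False.
Proof.
  intros D1 D2 Hlt1 HC H4 t0 Hz0.
  destruct (Rtotal_order (z1 t0) 0) as [Hneg|[Hzero|Hpos]].
  - apply (forwardB (fun t => z (- t)) (fun t => - z1 (- t)) (fun t => z2 (- t))) with (t1 := - t0).
    + intros t. pose proof (is_derive_comp z (fun t => - t) t _ (-1) (D1 (- t))) as H.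
      assert (Hd : is_derive (fun t : R => - t) t (-1)) by (auto_derive; auto; ring).
      specialize (H Hd). unfold scal in H; simpl in H; unfold mult in H; simpl in H.
      replace (- z1 (- t)) with (-1 * z1 (- t)) by ring. exact H.
    + intros t. pose proof (is_derive_comp z1 (fun t => - t) t _ (-1) (D2 (- t))) as H.
      assert (Hd : is_derive (fun t : R => - t) t (-1)) by (auto_derive; auto; ring).
      specialize (H Hd). unfold scal in H; simpl in H; unfold mult in H; simpl in H.
      apply (is_derive_opp (fun t => z1 (- t))) in H.
      replace (z2 (- t)) with (opp (-1 * z2 (- t))); [exact H|].
      unfold opp; simpl; ring.
    + intros t; apply Hlt1.
    + intros t Ht. specialize (HC (- t) Ht). unfold Rsqr in *. nra.
    + rewrite Ropp_involutive. auto.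
    + rewrite Ropp_involutive. lra.
  - specialize (H4 t0 Hz0 Hzero).
    pose proof (D2 t0) as E2. apply is_derive_Reals in E2.
    pose proof (D1 t0) as E1. apply is_derive_Reals in E1.
    destruct (E2 (z2 t0 / 2)) as [d2 Hd2]; [lra|].
    destruct (E1 1) as [d1 Hd1]; [lra|].
    pose proof (cond_pos d1). pose proof (cond_pos d2).
    set (h := Rmin (Rmin d1 d2) (z t0) / 2).
    assert (Hh0 : 0 < h).
    { unfold h. assert (0 < Rmin (Rmin d1 d2) (z t0)); [|lra].
      repeat apply Rmin_case; auto; apply cond_pos. }
    assert (Hh1 : h < d1).
    { unfold h. assert (Rmin (Rmin d1 d2) (z t0) <= d1); [|lra].
      eapply Rle_trans; [apply Rmin_l| apply Rmin_l]. }
    assert (Hh2 : h < d2).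
    { unfold h. assert (Rmin (Rmin d1 d2) (z t0) <= d2); [|lra].
      eapply Rle_trans; [apply Rmin_l| apply Rmin_r]. }
    assert (Hh3 : h < z t0).
    { unfold h. assert (Rmin (Rmin d1 d2) (z t0) <= z t0); [|lra]. apply Rmin_r. }
    specialize (Hd1 h ltac:(lra) ltac:(rewrite Rabs_right; lra)).
    specialize (Hd2 h ltac:(lra) ltac:(rewrite Rabs_right; lra)).
    rewrite Hzero in Hd1, Hd2.
    apply Rabs_def2 in Hd1. apply Rabs_def2 in Hd2.
    apply (forwardB z z1 z2 D1 D2 Hlt1 HC (t0 + h)).
    + destruct Hd1 as [Ha Hb].
      assert (z (t0 + h) - z t0 > - h).
      { apply (Rmult_lt_compat_r h) in Hb; auto. unfold Rdiv in Hb.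
        replace ((z (t0 + h) - z t0) * / h - 0) with ((z (t0 + h) - z t0) * / h) in Hb by ring.
        rewrite Rmult_assoc, Rinv_l in Hb; lra. }
      lra.
    + destruct Hd2 as [Ha Hb].
      apply (Rmult_lt_compat_r h) in Hb; auto. unfold Rdiv in Hb.
      replace ((z1 (t0 + h) - 0) * / h - z2 t0) with (z1 (t0 + h) * / h - z2 t0) in Hb by ring.
      assert (Hq : (z1 (t0 + h) * / h - z2 t0) * h = z1 (t0 + h) - z2 t0 * h) by (field; lra).
      rewrite Hq in Hb. assert (0 < z2 t0 * h) by (apply Rmult_lt_0_compat; lra). lra.
  - apply (forwardB z z1 z2 D1 D2 Hlt1 HC t0); auto.
Qed.

Lemma is_derive_fst' {U V : NormedModule R_AbsRing} (f : R -> U*V) x l : is_derive f x l -> is_derive (fun t => fst (f t)) x (fst l).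
Proof. intros H. unfold is_derive in *. apply (filterdiff_comp' f fst x _ fst H). apply filterdiff_linear, is_linear_fst. Qed.
Lemma is_derive_snd' {U V : NormedModule R_AbsRing} (f : R -> U*V) x l : is_derive f x l -> is_derive (fun t => snd (f t)) x (snd l).
Proof. intros H. unfold is_derive in *. apply (filterdiff_comp' f snd x _ snd H). apply filterdiff_linear, is_linear_snd. Qed.

Lemma comps (g g1 : R -> vec3) t : is_derive g t (g1 t) ->
  is_derive (fun t => fst (fst (g t))) t (fst (fst (g1 t))) /\
  is_derive (fun t => snd (fst (g t))) t (snd (fst (g1 t))) /\
  is_derive (fun t => snd (g t)) t (snd (g1 t)).
Proof.
  intros H. split; [|split].
  - apply (is_derive_fst' (fun t => fst (g t))). apply (is_derive_fst' g). exact H.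
  - apply (is_derive_snd' (fun t => fst (g t))). apply (is_derive_fst' g). exact H.
  - apply (is_derive_snd' g). exact H.
Qed.

Lemma const_deriv (f : R -> R) k l t : (forall s, f s = k) -> is_derive f t l -> l = 0.
Proof.
  intros Hk Hd. assert (Hd' : is_derive (fun _ => k) t l).
  { eapply is_derive_ext; [|exact Hd]. intros; simpl; auto. }
  apply is_derive_unique in Hd'. rewrite Derive_const in Hd'. auto.
Qed.

Lemma dot_deriv (a b c d e f a1 b1 c1 d1 e1 f1 : R -> R) t :
  is_derive a t (a1 t) -> is_derive b t (b1 t) -> is_derive c t (c1 t) ->
  is_derive d t (d1 t) -> is_derive e t (e1 t) -> is_derive f t (f1 t) ->
  is_derive (fun t => a t * d t + b t * e t + c t * f t) t
    (a1 t * d t + a t * d1 t + (b1 t * e t + b t * e1 t) + (c1 t * f t + c t * f1 t)).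
Proof.
  intros Ha Hb Hc Hd He Hf.
  auto_derive.
  - repeat split; eexists; eassumption.
  - change (Derive (fun x => a x) t) with (Derive a t).
    change (Derive (fun x => b x) t) with (Derive b t).
    change (Derive (fun x => c x) t) with (Derive c t).
    change (Derive (fun x => d x) t) with (Derive d t).
    change (Derive (fun x => e x) t) with (Derive e t).
    change (Derive (fun x => f x) t) with (Derive f t).
    rewrite (is_derive_unique _ _ _ Ha), (is_derive_unique _ _ _ Hb), (is_derive_unique _ _ _ Hc),
      (is_derive_unique _ _ _ Hd), (is_derive_unique _ _ _ He), (is_derive_unique _ _ _ Hf).
    ring.
Qed.

Lemma sqrt_eq1 d : sqrt d = 1 -> d = 1.
Proof.
  intros H. destruct (Rle_lt_dec d 0) as [Hd|Hd].
  - rewrite sqrt_neg_0 in H; auto; lra.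
  - rewrite <- (sqrt_sqrt d); [rewrite H; ring| lra].
Qed.

Lemma pointwise alpha x y z x1 y1 z1 x2 y2 z2 :
  alpha <= -1 -> 0 < z < 1 ->
  x*x+y*y+z*z = 1 -> x1*x1+y1*y1+z1*z1 = 1 -> x*x1+y*y1+z*z1 = 0 ->
  x1*x2+y1*y2+z1*z2 = 0 -> x*x2+y*y2+z*z2 = -1 ->
  x2*(y1*z - z1*y) + y2*(z1*x - x1*z) + z2*(x1*y - y1*x) =
    alpha * ((x*y1 - y*x1) / sqrt (1 - z²)) / acos z ->
  0 <= z2 * (1 - z²) + z * z1² /\ (z1 = 0 -> 0 < z2).
Proof.
  intros Hal Hz h1 h2 h3 h4 h5 Hk.
  set (L := x*y1 - y*x1) in *.
  set (K := x2*(y1*z - z1*y) + y2*(z1*x - x1*z) + z2*(x1*y - y1*x)) in *.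
  assert (I1 : L*L = (1 - z*z - z1*z1) + (x*x+y*y+z*z - 1)*(1 - z1*z1 + (x1*x1+y1*y1+z1*z1 - 1))
     + (x1*x1+y1*y1+z1*z1 - 1)*(1 - z*z) - (x*x1+y*y1+z*z1)*((x*x1+y*y1+z*z1) - 2*z*z1)) by (unfold L; ring).
  rewrite h1, h2, h3 in I1.
  assert (I2 : ((x*x+y*y+z*z)*(x1*x1+y1*y1+z1*z1) - (x*x1+y*y1+z*z1)*(x*x1+y*y1+z*z1)) * z2 =
     (x*x2+y*y2+z*z2) * (z*(x1*x1+y1*y1+z1*z1) - z1*(x*x1+y*y1+z*z1))
     + (x1*x2+y1*y2+z1*z2) * (z1*(x*x+y*y+z*z) - z*(x*x1+y*y1+z*z1))
     + (x2*(y*z1 - z*y1) + y2*(z*x1 - x*z1) + z2*(x*y1 - y*x1)) * L) by (unfold L; ring).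
  rewrite h1, h2, h3, h4, h5 in I2.
  assert (I3 : x2*(y*z1 - z*y1) + y2*(z*x1 - x*z1) + z2*(x*y1 - y*x1) = - K) by (unfold K; ring).
  rewrite I3 in I2.
  assert (Ez2 : z2 = - z - K * L) by lra.
  set (u := acos z) in *. set (s := sqrt (1 - z²)) in *.
  assert (Hs2 : s * s = 1 - z*z) by (unfold s; rewrite sqrt_sqrt; unfold Rsqr; nra).
  assert (Hs : 0 < s) by (unfold s; apply sqrt_lt_R0; unfold Rsqr; nra).
  assert (Hb := acos_bound z). fold u in Hb.
  assert (Hcu : cos u = z) by (unfold u; apply cos_acos; lra).
  assert (Hu0 : 0 < u).
  { destruct (Req_dec u 0) as [E|]; [|lra]. rewrite E, cos_0 in Hcu. lra. }
  assert (Hu1 : u < PI / 2).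
  { destruct (Rlt_le_dec u (PI/2)) as [|E]; [auto|].
    assert (cos u <= 0) by (apply cos_le_0; lra). lra. }
  assert (Hsu : sin u = s) by (unfold u, s; apply sin_acos; lra).
  assert (Htr : u * z < s) by (rewrite <- Hcu, <- Hsu; apply trig_ineq; lra).
  assert (HK : K = alpha * L / (s * u)) by (rewrite Hk; field; lra).
  assert (HC : z2 * (1 - z²) + z * z1² = L * L * ((- alpha * s - z * u) / u)).
  { assert (Hz1s : z1 * z1 = s * s - L * L) by (rewrite Hs2; ring_simplify in I1; lra).
    rewrite Ez2, HK. unfold Rsqr. rewrite Hz1s, <- Hs2. field. lra. }
  assert (Hq : 0 < (- alpha * s - z * u) / u) by (apply Rdiv_lt_0_compat; nra).
  split.
  - rewrite HC. apply Rmult_le_pos; [nra|lra].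
  - intros Hz1. assert (HL : 0 < L * L) by (rewrite I1, Hz1; nra).
    assert (0 < z2 * (1 - z²)).
    { assert (0 < L * L * ((- alpha * s - z * u) / u)) by (apply Rmult_lt_0_compat; lra).
      rewrite Hz1 in HC. unfold Rsqr in *. nra. }
    unfold Rsqr in *. nra.
Qed.

Theorem theorem3p5 (alpha : R) (g g1 g2 : R -> vec3) :
  alpha <> 0 ->
  complete_unit_speed_spherical_curve g g1 g2 ->
  alpha_stationary alpha g g1 g2 ->
  N_not_adherent g ->
  (exists t, 0 < zcoord (g t)) ->
  alpha > -1.
Proof.
  intros Ha0 [Hd [Hn1 Hn2]] Hst [eps [Heps HN]] [t0 Ht0].
  destruct (Rle_lt_dec alpha (-1)) as [Hal|]; [exfalso|lra].
  set (X := fun t => fst (fst (g t))). set (Y := fun t => snd (fst (g t))). set (Z := fun t => snd (g t)).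
  set (X1 := fun t => fst (fst (g1 t))). set (Y1 := fun t => snd (fst (g1 t))). set (Z1 := fun t => snd (g1 t)).
  set (X2 := fun t => fst (fst (g2 t))). set (Y2 := fun t => snd (fst (g2 t))). set (Z2 := fun t => snd (g2 t)).
  assert (Eg : forall t, g t = (X t, Y t, Z t)) by (intros t; unfold X, Y, Z; destruct (g t) as [[? ?] ?]; auto).
  assert (Eg1 : forall t, g1 t = (X1 t, Y1 t, Z1 t)) by (intros t; unfold X1, Y1, Z1; destruct (g1 t) as [[? ?] ?]; auto).
  assert (Eg2 : forall t, g2 t = (X2 t, Y2 t, Z2 t)) by (intros t; unfold X2, Y2, Z2; destruct (g2 t) as [[? ?] ?]; auto).
  assert (D0 : forall t, is_derive X t (X1 t) /\ is_derive Y t (Y1 t) /\ is_derive Z t (Z1 t)).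
  { intros t. apply (comps g g1 t), Hd. }
  assert (D1 : forall t, is_derive X1 t (X2 t) /\ is_derive Y1 t (Y2 t) /\ is_derive Z1 t (Z2 t)).
  { intros t. apply (comps g1 g2 t), Hd. }
  assert (e1 : forall t, X t * X t + Y t * Y t + Z t * Z t = 1).
  { intros t. specialize (Hn1 t). unfold norm3 in Hn1. rewrite Eg in Hn1. apply sqrt_eq1 in Hn1. exact Hn1. }
  assert (e2 : forall t, X1 t * X1 t + Y1 t * Y1 t + Z1 t * Z1 t = 1).
  { intros t. specialize (Hn2 t). unfold norm3 in Hn2. rewrite Eg1 in Hn2. apply sqrt_eq1 in Hn2. exact Hn2. }
  assert (e3 : forall t, X t * X1 t + Y t * Y1 t + Z t * Z1 t = 0).
  { intros t. destruct (D0 t) as [a [b c]].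
    pose proof (const_deriv _ 1 _ t e1 (dot_deriv X Y Z X Y Z X1 Y1 Z1 X1 Y1 Z1 t a b c a b c)). lra. }
  assert (e4 : forall t, X1 t * X2 t + Y1 t * Y2 t + Z1 t * Z2 t = 0).
  { intros t. destruct (D1 t) as [a [b c]].
    pose proof (const_deriv _ 1 _ t e2 (dot_deriv X1 Y1 Z1 X1 Y1 Z1 X2 Y2 Z2 X2 Y2 Z2 t a b c a b c)). lra. }
  assert (e5 : forall t, X t * X2 t + Y t * Y2 t + Z t * Z2 t = -1).
  { intros t. destruct (D0 t) as [a [b c]]. destruct (D1 t) as [a' [b' c']].
    pose proof (const_deriv _ 0 _ t e3 (dot_deriv X Y Z X1 Y1 Z1 X1 Y1 Z1 X2 Y2 Z2 t a b c a' b' c')).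
    specialize (e2 t). lra. }
  assert (Hlt1 : forall t, Z t < 1).
  { intros t. specialize (HN t). unfold norm3 in HN. rewrite Eg in HN. simpl in HN.
    specialize (e1 t). destruct (Rlt_le_dec (Z t) 1) as [|Hz]; [auto|exfalso].
    rewrite sqrt_neg_0 in HN; [lra|]. nra. }
  assert (Hpt : forall t, 0 < Z t -> 0 <= Z2 t * (1 - (Z t)²) + Z t * (Z1 t)² /\ (Z1 t = 0 -> 0 < Z2 t)).
  { intros t Hz1. assert (Hz2 := Hlt1 t).
    assert (HNP : g t <> NP) by (rewrite Eg; unfold NP; intro E; injection E; lra).
    assert (HSP : g t <> Defs.SP) by (rewrite Eg; unfold Defs.SP; intro E; injection E; lra).
    specialize (Hst t HNP HSP).
    assert (Hn := Hn2 t).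
    unfold kappa, normal_n, xi, distN in Hst. rewrite Hn in Hst.
    rewrite Eg, Eg1, Eg2 in Hst. unfold NP, dot3, cross3, scal3, sub3 in Hst. cbn in Hst.
    replace (X t * 0 + Y t * 0 + Z t * 1) with (Z t) in Hst by ring.
    rewrite sin_acos in Hst by lra.
    assert (Hs : 0 < sqrt (1 - (Z t)²)) by (apply sqrt_lt_R0; unfold Rsqr; nra).
    assert (Hu : acos (Z t) <> 0).
    { intro E. assert (cos (acos (Z t)) = Z t) by (apply cos_acos; lra).
      rewrite E, cos_0 in H. lra. }
    apply (pointwise alpha (X t) (Y t) (Z t) (X1 t) (Y1 t) (Z1 t) (X2 t) (Y2 t) (Z2 t)); auto.
    eapply eq_trans; [| eapply eq_trans; [exact Hst|]].
    - field.
    - field. split; lra. }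
  destruct (D0 t0) as [_ [_ _]].
  apply (lemmaA Z Z1 Z2) with (t0 := t0).
  - intros t. apply (D0 t).
  - intros t. apply (D1 t).
  - exact Hlt1.
  - intros t Ht. apply (Hpt t Ht).
  - intros t Ht. apply (Hpt t Ht).
  - rewrite Eg in Ht0. exact Ht0.
Qed.
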